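(* For $n,s\in\mathbb{N}$, $$\overline{H}_n(\overline{s})=\sum_{k=1}^n(-1)^{k-1}\binom{n}{k}\,{}_{s+1}F_s\left(\{\tfrac12\}^{s},1-k;\{\tfrac32\}^{s};-1\right).$$
   Context: $\mathbb{N}$ is the set of positive integers; $\overline{H}_n(\overline{s})=\sum_{k=0}^{n-1}\frac{(-1)^k}{(2k+1)^s}$ (odd alternating harmonic sum); $\{a\}^s$ denotes $a$ repeated $s$ times. ${}_{s+1}F_s(a_1,\ldots,a_{s+1};b_1,\ldots,b_s;x)=\sum_{i\geq 0}\frac{(a_1)_i\cdots(a_{s+1})_i}{(b_1)_i\cdots(b_s)_i}\frac{x^i}{i!}$, with $(a)_0=1$, $(a)_i=a(a+1)\cdots(a+i-1)$ for $i>0$ (a finite sum here since $1-k\leq 0$ is an integer). *)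

(* Defs.v *)
From HB Require Import structures.
From mathcomp Require Import all_boot all_order all_algebra.
Set Implicit Arguments. Unset Strict Implicit. Unset Printing Implicit Defensive.
Import Order.TTheory GRing.Theory Num.Theory.
Local Open Scope ring_scope.

Definition Hbar_odd (R : fieldType) (n s : nat) : R :=
  \sum_(k < n) (-1) ^+ k / ((2 * k + 1)%:R) ^+ s.

Definition poch (R : pzRingType) (a : R) (i : nat) : R :=
  \prod_(j < i) (a + j%:R).

Definition hyp_term (R : fieldType) (as_ bs : seq R) (x : R) (i : nat) : R :=
  (\prod_(a <- as_) poch a i) / (\prod_(b <- bs) poch b i) * x ^+ i / (i`!)%:R.

(* When one upper
   parameter equals 1-k (k >= 1), all terms with index i >= k vanish, so
   for any N >= k this is the (terminating) hypergeometric function. *)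
Definition hypF_sum (R : fieldType) (as_ bs : seq R) (x : R) (N : nat) : R :=
  \sum_(i < N) hyp_term as_ bs x i.

(* Main.v *)
Require Import Defs.
From HB Require Import structures.
From mathcomp Require Import all_boot all_order all_algebra.
From mathcomp Require Import ring lra.
Import Order.TTheory GRing.Theory Num.Theory.
Local Open Scope ring_scope.


Section Comb.
Variable R : fieldType.

Definition Sa (a : nat -> R) (j : nat) : R := \sum_(i < j.+1) 'C(j, i)%:R * a i.
Definition Ua (a : nat -> R) (n : nat) : R :=
  \sum_(j < n.+1) (-1) ^+ j * 'C(n, j)%:R * Sa a j.

Lemma Hshift n m (f : nat -> R) :
  \sum_(j < m.+1) 'C(n, j)%:R * f j = f 0%N + \sum_(j < m) 'C(n, j.+1)%:R * f j.+1.
Proof. by rewrite big_ord_recl bin0 mul1r. Qed.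

Lemma Hext n (f : nat -> R) :
  \sum_(j < n.+2) 'C(n, j)%:R * f j = \sum_(j < n.+1) 'C(n, j)%:R * f j.
Proof. by rewrite big_ord_recr /= bin_small // mul0r addr0. Qed.

Lemma Sa_S a j : Sa a j.+1 = Sa a j + Sa (fun i => a i.+1) j.
Proof.
rewrite /Sa Hshift.
under eq_bigr do rewrite binS natrD mulrDl.
rewrite big_split /= addrA; congr (_ + _).
rewrite -(Hext j a) (Hshift j j.+1) //.
Qed.

Lemma Ua_S a n : Ua a n.+1 = - Ua (fun i => a i.+1) n.
Proof.
rewrite /Ua.
have -> : \sum_(j < n.+2) (-1) ^+ j * 'C(n.+1, j)%:R * Sa a j =
   \sum_(j < n.+2) 'C(n.+1, j)%:R * ((-1) ^+ j * Sa a j).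
  by apply: eq_bigr => j _; rewrite mulrCA mulrA.
rewrite (Hshift _ _ (fun j => (-1) ^+ j * Sa a j)).
under eq_bigr do rewrite binS natrD mulrDl.
rewrite big_split /=.
have E1 : \sum_(i < n.+1) 'C(n, i.+1)%:R * ((-1) ^+ i.+1 * Sa a i.+1)
   = \sum_(j < n.+1) (-1) ^+ j * 'C(n, j)%:R * Sa a j - (-1) ^+ 0 * Sa a 0.
  have -> : \sum_(j < n.+1) (-1) ^+ j * 'C(n, j)%:R * Sa a j =
     \sum_(j < n.+1) 'C(n, j)%:R * ((-1) ^+ j * Sa a j).
    by apply: eq_bigr => j _; rewrite mulrCA mulrA.
  rewrite -(Hext n (fun j => (-1) ^+ j * Sa a j)) (Hshift n n.+1 (fun j => (-1) ^+ j * Sa a j)) /=.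
  by rewrite addrC addKr.
rewrite E1.
under eq_bigr do rewrite Sa_S exprS mulN1r mulNr mulrN mulrDr mulrDr.
rewrite sumrN big_split /= opprD.
have -> : \sum_(i < n.+1) (-1) ^+ i * 'C(n, i)%:R * Sa (fun i0 : nat => a i0.+1) i
   = \sum_(i < n.+1) 'C(n, i)%:R * ((-1) ^+ i * Sa (fun i0 : nat => a i0.+1) i).
  by apply: eq_bigr => j _; rewrite mulrCA mulrA.
have -> : \sum_(i < n.+1) (-1) ^+ i * 'C(n, i)%:R * Sa a i
   = \sum_(i < n.+1) 'C(n, i)%:R * ((-1) ^+ i * Sa a i).
  by apply: eq_bigr => j _; rewrite mulrCA mulrA.
rewrite expr0 mul1r.
set A := \sum_(i < n.+1) _ .
set B := \sum_(i < n.+1) _ .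
rewrite /=.
ring.
Qed.


Lemma Ua_val n : forall a, Ua a n = (-1) ^+ n * a n.
Proof.
elim: n => [|n IH] a.
  by rewrite /Ua big_ord1 /Sa big_ord1 /= !mul1r.
by rewrite Ua_S IH exprS mulN1r mulNr.
Qed.

Lemma Ta_val a n :
  \sum_(m < n) (-1) ^+ m * 'C(n, m.+1)%:R * Sa a m = \sum_(i < n) (-1) ^+ i * a i.
Proof.
elim: n => [|n IH]; first by rewrite !big_ord0.
under eq_bigr do rewrite binS natrD mulrDr mulrDl.
rewrite big_split /= big_ord_recr /= bin_small // mulr0 mul0r addr0 IH.
by rewrite [RHS]big_ord_recr /=; congr (_ + _); exact: (Ua_val n a).
Qed.

End Comb.
Arguments Sa {R}.
Arguments Ta_val {R}.

Lemma prod_nseq (T : Type) (R : comRingType) (s : nat) (x : T) (F : T -> R) :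
  \prod_(b <- nseq s x) F b = F x ^+ s.
Proof. by elim: s => [|s IH]; rewrite ?big_nil ?expr0 // big_cons IH exprS. Qed.

Lemma poch_S (R : pzRingType) (a : R) i : poch a i.+1 = a * poch (a + 1) i.
Proof.
rewrite /poch big_ord_recl addr0; congr (_ * _).
by apply: eq_bigr => j _; have -> : (lift ord0 j : nat) = j.+1 by [];
  rewrite -natr1 (addrC j%:R) addrA.
Qed.

Lemma poch_Sr (R : pzRingType) (a : R) i : poch a i.+1 = poch a i * (a + i%:R).
Proof. by rewrite /poch big_ord_recr. Qed.

Lemma poch_neg (R : comPzRingType) m i : poch (- (m%:R) : R) i = (-1) ^+ i * (m ^_ i)%:R.
Proof.
elim: i => [|i IH]; first by rewrite /poch big_ord0 expr0 mul1r.
rewrite poch_Sr IH ffactnSr natrM exprS.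
case: (leqP i m) => h.
  rewrite natrB //. 
  ring.
by rewrite ffact_small // mulr0n mulr0 !mul0r mulr0.
Qed.


Lemma poch_gt0 (R : realFieldType) (a : R) i : 0 < a -> 0 < poch a i.
Proof.
move=> ha; rewrite /poch; apply: prodr_gt0 => j _.
have := ler0n R j; lra.
Qed.

Lemma poch_half (R : realFieldType) i :
  poch (1 / 2 : R) i = poch (3 / 2) i / (2 * i + 1)%:R.
Proof.
have h1 := @poch_S R (1 / 2) i.
rewrite poch_Sr in h1.
have e32 : (1 / 2 + 1 : R) = 3 / 2 by field.
rewrite e32 in h1.
have hc : (1 / 2 + i%:R : R) != 0.
  apply: lt0r_neq0; have := ler0n R i; lra.
have hd : ((2 * i + 1)%:R : R) != 0 by rewrite pnatr_eq0 addn1.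
apply: (mulIf hc); rewrite h1 natrD natrM.
have hd' : (2 * (i%:R) + 1 : R) != 0 by move: hd; rewrite natrD natrM.
field; exact: hd'.
Qed.

Lemma hyp_eval (R : realFieldType) s m i :
  hyp_term (rcons (nseq s (1 / 2 : R)) (1 - (m.+1)%:R)) (nseq s (3 / 2 : R)) (-1) i
  = 'C(m, i)%:R * (((2 * i + 1)%:R) ^+ s)^-1.
Proof.
rewrite /hyp_term big_rcons /= !prod_nseq.
have -> : (1 - (m.+1)%:R : R) = - m%:R by rewrite -natr1; ring.
rewrite poch_neg poch_half -bin_ffact natrM.
have hQ : poch (3 / 2 : R) i != 0 by rewrite gt_eqF // poch_gt0 //; lra.
have hc : ((2 * i + 1)%:R : R) != 0 by rewrite pnatr_eq0 addn1.
have hf : ((i`!)%:R : R) != 0 by rewrite pnatr_eq0 -lt0n fact_gt0.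
set Q := poch _ i; set c := (_ * _ + _)%:R; set f := (i`!)%:R; set e := (-1) ^+ i.
have he : e * e = 1 by rewrite /e -exprMn mulrNN mulr1 expr1n.
have -> : (Q / c) ^+ s * (e * ('C(m, i)%:R * f)) / Q ^+ s * e / f
   = (e * e) * ((Q / c) ^+ s * ('C(m, i)%:R * f) / Q ^+ s / f).
  by field; apply/andP; split => //; exact: expf_neq0.
rewrite he mul1r.
rewrite expr_div_n.
have hq : Q ^+ s != 0 by exact: expf_neq0.
have hd : c ^+ s != 0 by exact: expf_neq0.
move: hq hd; set q := Q ^+ s; set d := c ^+ s => hq hd.
by field; rewrite hq hd hf.
Qed.

Theorem corollary3p4 (R : realFieldType) (n s : nat) :
  (0 < n)%N -> (0 < s)%N ->
  Hbar_odd R n s =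
  \sum_(1 <= k < n.+1)
     (-1) ^+ (k - 1) * ('C(n, k))%:R *
     hypF_sum (rcons (nseq s (1 / 2 : R)) (1 - k%:R)) (nseq s (3 / 2 : R)) (-1) n.+1.
Proof.
move=> _ _.
set a := fun i : nat => (((2 * i + 1)%:R : R) ^+ s)^-1.
have hS : forall m, (m < n)%N -> \sum_(i < n.+1) 'C(m, i)%:R * a i = Sa a m.
  move=> m hm; rewrite /Sa (@big_ord_widen R 0 +%R m.+1 n.+1 (fun i => 'C(m, i)%:R * a i)); last by rewrite ltnS ltnW.
  rewrite [RHS]big_mkcond /=; apply: eq_bigr => i _.
  by case: ifP => // /negbT; rewrite -leqNgt => h; rewrite bin_small // mul0r.
rewrite (big_add1 _ _ 0 n.+1) /= big_mkord.
rewrite /Hbar_odd -(Ta_val a n).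
apply: eq_bigr => m _.
rewrite subn1 /= /hypF_sum.
under eq_bigr do rewrite hyp_eval.
by rewrite hS.
Qed.
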